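(* Consider the algorithm described in the context, and suppose it does not terminate finitely. Then for all $k\ge1$, $0<\tau_k\le\tau_{k-1}$.
   Context: Problem: $\min_{x\in\mathbb{R}^n} f(x)+r(x)$ subject to $c(x)=0$, where $f:\mathbb{R}^n\to\mathbb{R}$ and $c:\mathbb{R}^n\to\mathbb{R}^m$ ($m\le n$) are continuously differentiable and $r:\mathbb{R}^n\to\mathbb{R}_{\ge 0}$ is convex. Write $g(x)=\nabla f(x)$, $J(x)=\nabla c(x)^T$, and $f_k=f(x_k)$, $g_k=g(x_k)$, $c_k=c(x_k)$, $J_k=J(x_k)$, $r_k=r(x_k)$. All norms are Euclidean. Merit function: $\Phi_\tau(x)=\tau(f(x)+r(x))+\|c(x)\|_2$. Algorithm: inputs $x_0$, $\alpha_0>0$, $\tau_{-1}>0$; constants $\kappa_v>0$, $\sigma_c,\epsilon_\tau,\xi,\eta\in(0,1)$, $\sigma_u\in(0,1/2]$, $\bar\sigma_u:=\sigma_u+\tfrac12$. For $k=0,1,\dots$: 1. If $J_k^Tc_k\ne0$, compute $v_k$ with $v_k\in\mathrm{Range}(J_k^T)$, $\|v_k\|_2\le\kappa_v\alpha_k\|J_k^Tc_k\|_2$, $\|c_k+J_kv_k\|_2\le\|c_k+J_kv_k^c\|_2$, where $v_k^c=-\beta_k^cJ_k^Tc_k$ with $\beta_k^c$ minimizing $\tfrac12\|c_k-\beta J_kJ_k^Tc_k\|_2^2$ over $0\le\beta\le\kappa_v\alpha_k$. Otherwise set $v_k=0$, and if $c_k\ne0$ terminate. 2. Let $u_k$ be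 the unique minimizer of $g_k^Tu+\tfrac1{2\alpha_k}\|u\|_2^2+r(x_k+v_k+u)$ subject to $J_ku=0$; set $s_k=v_k+u_k$. If $s_k=0$, terminate. 3. Let $D_k:=g_k^Ts_k+\bar\sigma_u\|s_k\|_2^2/\alpha_k+r(x_k+s_k)-r_k$; $\tau_{k,\mathrm{trial}}=\infty$ if $D_k\le0$, else $\tau_{k,\mathrm{trial}}=(1-\sigma_c)(\|c_k\|_2-\|c_k+J_kv_k\|_2)/D_k$. Set $\tau_k=\tau_{k-1}$ if $\tau_{k-1}\le\tau_{k,\mathrm{trial}}$, else $\tau_k=\min\{(1-\epsilon_\tau)\tau_{k-1},\tau_{k,\mathrm{trial}}\}$. 4. With $\Delta q_k(s,\tau):=-\tau(g_k^Ts+\tfrac1{2\alpha_k}\|s\|_2^2+r(x_k+s)-r_k)+\|c_k\|_2-\|c_k+J_ks\|_2$: if $\Phi_{\tau_k}(x_k+s_k)\le\Phi_{\tau_k}(x_k)-\eta\Delta q_k(s_k,\tau_k)$ set $x_{k+1}=x_k+s_k$, $\alpha_{k+1}=\alpha_k$; else $x_{k+1}=x_k$, $\alpha_{k+1}=\xi\alpha_k$. Standing assumption: there is an open convex set $\mathcal X$ containing all iterates $x_k$ and trial points $x_k+s_k$ such that $f$ is bounded below on $\mathcal X$, $\nabla f$ is bounded and Lipschitz continuous on $\mathcal X$, $c$ is bounded on $\mathcal X$, $J$ is bounded and Lipschitz continuous on $\mathcal X$, and all subgradients of $r$ at points of $\mathcal X$ are uniformly bounded in norm. *)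

(* Defs.v *)
From HB Require Import structures.
From mathcomp Require Import all_boot all_order all_algebra.
From mathcomp Require Import all_classical all_reals all_analysis.
Set Implicit Arguments. Unset Strict Implicit. Unset Printing Implicit Defensive.
Import Order.TTheory GRing.Theory Num.Theory.
Import numFieldNormedType.Exports.
Local Open Scope classical_set_scope.
Local Open Scope ring_scope.

Section Defs.
Variable R : realType.

Definition dotv {n : nat} (u v : 'cV[R]_n) : R := \sum_i u i 0 * v i 0.
Definition enorm {n : nat} (v : 'cV[R]_n) : R := Num.sqrt (dotv v v).
(* Frobenius norm for matrices (used only for boundedness / Lipschitz
   statements, where all matrix norms are equivalent) *)
Definition fnorm {m n : nat} (A : 'M[R]_(m, n)) : R :=
  Num.sqrt (\sum_i \sum_j A i j ^+ 2).

Definition convex_fun {n : nat} (r : 'cV[R]_n -> R) : Prop :=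
  forall (x y : 'cV[R]_n) (t : R), 0 <= t <= 1 ->
    r (t *: x + (1 - t) *: y) <= t * r x + (1 - t) * r y.

Definition subgrad {n : nat} (r : 'cV[R]_n -> R) (x y : 'cV[R]_n) : Prop :=
  forall z, r x + dotv y (z - x) <= r z.

(* tau update of Step 3: tau_trial = +oo when D <= 0, num / D otherwise *)
Definition tau_update (eps_tau tau_prev D num : R) : R :=
  if D <= 0 then tau_prev
  else if tau_prev <= num / D then tau_prev
  else Num.min ((1 - eps_tau) * tau_prev) (num / D).

End Defs.

(* Main.v *)
Require Import Defs.
From HB Require Import structures.
From mathcomp Require Import all_boot all_order all_algebra.
From mathcomp Require Import all_classical all_reals all_analysis.
From mathcomp Require Import ring lra.
Import Order.TTheory GRing.Theory Num.Theory.
Import numFieldNormedType.Exports.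
Local Open Scope classical_set_scope.
Local Open Scope ring_scope.

Section H.
Variable R : realType.

Lemma dotvZr n (a : R) (u w : 'cV[R]_n) : dotv u (a *: w) = a * dotv u w.
Proof. rewrite /dotv mulr_sumr; apply: eq_bigr => i _; rewrite mxE; ring. Qed.

Lemma dotv_ge0 n (u : 'cV[R]_n) : 0 <= dotv u u.
Proof. rewrite /dotv; apply: sumr_ge0 => i _; rewrite -expr2; exact: sqr_ge0. Qed.

Lemma dotv_eq0 n (u : 'cV[R]_n) : dotv u u = 0 -> u = 0.
Proof.
move=> h; have := psumr_eq0P (fun i _ => (ltac:(rewrite -expr2; exact: sqr_ge0) : 0 <= u i 0 * u i 0)) h => H.
apply/matrixP => i j; rewrite ord1 mxE; have := H i isT.
by move/eqP; rewrite mulf_eq0 orbb => /eqP.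
Qed.

Lemma enorm_sq n (u : 'cV[R]_n) : enorm u ^+ 2 = dotv u u.
Proof. by rewrite /enorm sqr_sqrtr // dotv_ge0. Qed.

Lemma enorm_ge0 n (u : 'cV[R]_n) : 0 <= enorm u.
Proof. exact: sqrtr_ge0. Qed.

Lemma dotv_mul p n (A : 'M[R]_(p, n)) (u : 'cV[R]_n) (z : 'cV[R]_p) :
  dotv (A *m u) z = dotv u (A^T *m z).
Proof.
rewrite /dotv.
under eq_bigr do rewrite !mxE big_distrl /=.
under [RHS]eq_bigr do rewrite !mxE big_distrr /=.
rewrite exchange_big; apply: eq_bigr => j _; apply: eq_bigr => i _.
rewrite !mxE; ring.
Qed.

Lemma dotv_sqD n (c w : 'cV[R]_n) (a : R) :
  dotv (c + a *: w) (c + a *: w) = dotv c c + 2 * a * dotv c w + a ^+ 2 * dotv w w.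
Proof.
rewrite /dotv !mulr_sumr -!big_split; apply: eq_bigr => i _; rewrite !mxE /=; move: (c i 0) (w i 0) => p q; ring.
Qed.


Lemma tau_update_ok (eps tp D num : R) : 0 < eps < 1 -> 0 < tp ->
  (0 < D -> 0 < num) -> 0 < tau_update eps tp D num <= tp.
Proof.
move=> he htp hn; rewrite /tau_update; case: ifP => hD; first by rewrite htp lexx.
case: ifP => h2; first by rewrite htp lexx.
have hD' : 0 < D by rewrite ltNge hD.
have hq : 0 < num / D by rewrite divr_gt0 // hn.
apply/andP; split; first by rewrite lt_min hq andbT; apply: mulr_gt0 => //; lra.
by rewrite ge_min; apply/orP; left; nra.
Qed.

Lemma sq_lt (a b : R) : 0 <= a -> 0 <= b -> a ^+ 2 < b ^+ 2 -> a < b.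
Proof. move=> ha hb h; nra. Qed.

Lemma case1 m n (c : 'cV[R]_m) (Jm : 'M[R]_(m, n)) (vk : 'cV[R]_n) (K : R) :
  0 < K -> (Jm^T *m c != 0) ->
  (exists beta : R,
    [/\ 0 <= beta <= K,
        (forall beta', 0 <= beta' <= K ->
           enorm (c - beta *: (Jm *m Jm^T *m c)) ^+ 2 / 2
           <= enorm (c - beta' *: (Jm *m Jm^T *m c)) ^+ 2 / 2) &
        enorm (c + Jm *m vk) <= enorm (c + Jm *m (- beta *: (Jm^T *m c)))]) ->
  enorm (c + Jm *m vk) < enorm c.
Proof.
move=> hK hp [beta [hb hmin hv]].
set p := Jm^T *m c in hp hmin hv.
set w := Jm *m Jm^T *m c in hmin.
have hw : Jm *m (- beta *: p) = (- beta) *: w by rewrite -scalemxAr /w /p mulmxA.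
rewrite hw in hv.
have hP : 0 < dotv c w.
  rewrite /w -mulmxA /dotv.
  have -> : \sum_i c i 0 * (Jm *m (Jm^T *m c)) i 0 = dotv (Jm *m p) c.
    by rewrite /dotv; apply: eq_bigr => i _; rewrite mulrC.
  rewrite dotv_mul -/p lt_def dotv_ge0 andbT; apply/eqP => /dotv_eq0 h.
  by rewrite h eqxx in hp.
set P := dotv c w in hP.
set W := dotv w w.
have hW : 0 <= W by exact: dotv_ge0.
set b' := Num.min K (P / (W + 1)).
have hb'1 : b' <= K by rewrite ge_min lexx.
have hb'2 : b' <= P / (W + 1) by rewrite ge_min lexx orbT.
have hb'0 : 0 < b' by rewrite lt_min hK /= divr_gt0 // ltr_wpDl.
have hb'3 : b' * (W + 1) <= P by rewrite -ler_pdivlMr // ltr_wpDl.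
have := hmin b'; rewrite (ltW hb'0) hb'1 => /(_ isT).
have e1 : forall a, c - a *: w = c + (- a) *: w by move=> a; rewrite scaleNr.
rewrite !e1 !enorm_sq !dotv_sqD -/P -/W => h1.
have h2 : enorm (c + (- beta) *: w) < enorm c.
  apply: sq_lt; try exact: enorm_ge0.
  rewrite !enorm_sq dotv_sqD -/P -/W.
  have : b' ^+ 2 * W < 2 * b' * P by nra.
  lra.
exact: le_lt_trans hv h2.
Qed.

Lemma dotvZl n (a : R) (u w : 'cV[R]_n) : dotv (a *: u) w = a * dotv u w.
Proof. rewrite /dotv mulr_sumr; apply: eq_bigr => i _; rewrite mxE; ring. Qed.

Lemma case2 n m (g x u : 'cV[R]_n) (Jm : 'M[R]_(m, n)) (r : 'cV[R]_n -> R)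
  (alpha sig : R) :
  0 < alpha -> sig <= 1 / 2 -> convex_fun r -> Jm *m u = 0 ->
  (forall u', Jm *m u' = 0 ->
     dotv g u + enorm u ^+ 2 / (2 * alpha) + r (x + 0 + u)
     <= dotv g u' + enorm u' ^+ 2 / (2 * alpha) + r (x + 0 + u')) ->
  dotv g (0 + u) + (sig + 1 / 2) * enorm (0 + u) ^+ 2 / alpha
    + r (x + (0 + u)) - r x <= 0.
Proof.
move=> ha hs hc hJ hmin.
rewrite !add0r !addr0 in hmin *.
set a := dotv g u + r (x + u) - r x.
set E := dotv u u / (2 * alpha).
have hE : 0 <= E by rewrite divr_ge0 ?dotv_ge0 // mulr_ge0 // ltW.
have key : forall t, 0 <= t <= 1 -> (1 - t) * a <= (t ^+ 2 - 1) * E.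
  move=> t ht.
  have hJt : Jm *m (t *: u) = 0 by rewrite -scalemxAr hJ scaler0.
  have := hmin _ hJt.
  rewrite !enorm_sq dotvZl !dotvZr.
  have -> : t * (t * dotv u u) / (2 * alpha) = t ^+ 2 * E by rewrite /E !mulrA expr2.
  have hcv := hc (x + u) x t ht.
  have e : t *: (x + u) + (1 - t) *: x = x + t *: u.
    by apply/matrixP => i j; rewrite !mxE; ring.
  rewrite e in hcv.
  move=> h; rewrite /a; rewrite -/E in h.
  nra.
have ha0 : a <= - E by have := key 0; rewrite lexx ler01 /= => /(_ isT); lra.
have ha2 : a <= - (2 * E).
  case: (eqVneq E 0) => [E0|En0]; first by lra.
  have Ep : 0 < E by rewrite lt_def En0 hE.
  rewrite leNgt; apply/negP => hlt.
  set t := - a / (2 * E).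
  have ht2 : t * (2 * E) = - a by rewrite /t mulfVK // mulf_neq0 // pnatr_eq0.
  have ht0 : 0 <= t by rewrite /t divr_ge0 //; lra.
  have ht1 : t < 1 by rewrite /t ltr_pdivrMr; [lra | apply: mulr_gt0; lra].
  have := key t; rewrite ht0 (ltW ht1) => /(_ isT) hk.
  have h3 : (1 - t) * (a + (t + 1) * E) <= 0 by rewrite expr2 in hk; nra.
  have h4 : a + (t + 1) * E <= 0.
    rewrite leNgt; apply/negP => h5.
    have : 0 < (1 - t) * (a + (t + 1) * E) by apply: mulr_gt0; lra.
    lra.
  nra.
rewrite enorm_sq.
have -> : (sig + 1 / 2) * dotv u u / alpha = (2 * sig + 1) * E.
  rewrite /E; field; rewrite gt_eqF //.
rewrite -addrA.
have ha3 : dotv g u + (r (x + u) - r x) = a by rewrite /a addrA.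
have hsE : sig * E <= 1 / 2 * E by rewrite ler_wpM2r.
lra.
Qed.
End H.

(* Indexing: x k = x_k, alpha k = alpha_k, v k = v_k, u k = u_k (s_k = v k + u k),
   and tau is shifted: tau 0 = tau_{-1}, tau k.+1 = tau_k. *)
Theorem lemma3p8 (R : realType) (n m : nat)
  (f : 'cV[R]_n -> R) (g : 'cV[R]_n -> 'cV[R]_n)
  (c : 'cV[R]_n -> 'cV[R]_m) (J : 'cV[R]_n -> 'M[R]_(m, n))
  (r : 'cV[R]_n -> R)
  (kappa_v sigma_c eps_tau xi eta sigma_u : R)
  (x : nat -> 'cV[R]_n) (alpha : nat -> R) (tau : nat -> R)
  (v u : nat -> 'cV[R]_n) :
  (* problem data *)
  (m <= n)%N ->
  (forall y, differentiable f y /\ forall h, 'd f y h = dotv (g y) h) ->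
  continuous g ->
  (forall y, differentiable c y /\ forall h, 'd c y h = J y *m h) ->
  continuous J ->
  (forall y, 0 <= r y) -> convex_fun r ->
  (* constants *)
  0 < kappa_v -> 0 < sigma_c < 1 -> 0 < eps_tau < 1 -> 0 < xi < 1 ->
  0 < eta < 1 -> 0 < sigma_u <= 1 / 2 ->
  0 < alpha 0 -> 0 < tau 0 ->
  (* standing assumption *)
  (exists X : set 'cV[R]_n,
     open X /\ convex_set X /\
     (forall k, X (x k)) /\ (forall k, X (x k + (v k + u k))) /\
         (exists B, forall y, X y -> B <= f y) /\
         (exists B, forall y, X y -> enorm (g y) <= B) /\
         (exists L, forall y z, X y -> X z ->
              enorm (g y - g z) <= L * enorm (y - z)) /\
         (exists B, forall y, X y -> enorm (c y) <= B) /\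
         (exists B, forall y, X y -> fnorm (J y) <= B) /\
         (exists L, forall y z, X y -> X z ->
              fnorm (J y - J z) <= L * enorm (y - z)) /\
         (exists B, forall y w, X y -> subgrad r y w -> enorm w <= B)) ->
  (* Step 1 *)
  (forall k, (J (x k))^T *m c (x k) != 0 ->
     [/\ exists w : 'cV[R]_m, v k = (J (x k))^T *m w,
         enorm (v k) <= kappa_v * alpha k * enorm ((J (x k))^T *m c (x k)) &
         exists beta : R,
           [/\ 0 <= beta <= kappa_v * alpha k,
               (forall beta', 0 <= beta' <= kappa_v * alpha k ->
                  enorm (c (x k) - beta *: (J (x k) *m (J (x k))^T *m c (x k))) ^+ 2 / 2
                  <= enorm (c (x k) - beta' *: (J (x k) *m (J (x k))^T *m c (x k))) ^+ 2 / 2) &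
               enorm (c (x k) + J (x k) *m v k)
               <= enorm (c (x k) + J (x k) *m (- beta *: ((J (x k))^T *m c (x k))))]]) ->
  (forall k, (J (x k))^T *m c (x k) = 0 -> v k = 0) ->
  (* Step 2 *)
  (forall k, J (x k) *m u k = 0 /\
     forall u', J (x k) *m u' = 0 ->
       dotv (g (x k)) (u k) + enorm (u k) ^+ 2 / (2 * alpha k) + r (x k + v k + u k)
       <= dotv (g (x k)) u' + enorm u' ^+ 2 / (2 * alpha k) + r (x k + v k + u')) ->
  (* Step 3 *)
  (forall k, tau k.+1 =
     tau_update eps_tau (tau k)
       (dotv (g (x k)) (v k + u k) + (sigma_u + 1 / 2) * enorm (v k + u k) ^+ 2 / alpha k
          + r (x k + (v k + u k)) - r (x k))
       ((1 - sigma_c) * (enorm (c (x k)) - enorm (c (x k) + J (x k) *m v k)))) ->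
  (* Step 4 *)
  (forall k,
     let s := v k + u k in
     let Phi := fun y => tau k.+1 * (f y + r y) + enorm (c y) in
     let dq := - tau k.+1 * (dotv (g (x k)) s + enorm s ^+ 2 / (2 * alpha k)
                             + r (x k + s) - r (x k))
               + enorm (c (x k)) - enorm (c (x k) + J (x k) *m s) in
     if Phi (x k + s) <= Phi (x k) - eta * dq
     then x k.+1 = x k + s /\ alpha k.+1 = alpha k
     else x k.+1 = x k /\ alpha k.+1 = xi * alpha k) ->
  (* the algorithm does not terminate finitely *)
  (forall k, (J (x k))^T *m c (x k) = 0 -> c (x k) = 0) ->
  (forall k, v k + u k != 0) ->
  forall k, (1 <= k)%N -> 0 < tau k.+1 <= tau k.
Proof.
move=> hmn hf hg hc hJ hr0 hconv hkv hsc het hxi heta hsu ha0 ht0 hX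
  hs1 hv0 hs2 hs3 hs4 hnt hnz.
have hal : forall k, 0 < alpha k.
  elim=> // k IH; move: (hs4 k) => /=.
  by case: ifP => _ [_ ->] //; apply: mulr_gt0 => //; case/andP: hxi.
have step : forall k, 0 < tau k -> 0 < tau k.+1 <= tau k.
  move=> k ht; rewrite hs3; apply: tau_update_ok => // hD.
  case: (eqVneq ((J (x k))^T *m c (x k)) 0) => hp.
    have hv := hv0 k hp.
    have [hJu hmin] := hs2 k.
    rewrite hv in hmin hD.
    have := @case2 R _ _ (g (x k)) (x k) (u k) (J (x k)) r (alpha k) sigma_u (hal k)
      (ltac:(case/andP: hsu => //)) hconv hJu hmin.
    move=> h; exfalso; move: h; rewrite leNgt hD //.
  have [_ _ hb] := hs1 k hp.
  have hK : 0 < kappa_v * alpha k by apply: mulr_gt0.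
  have := @case1 R _ _ _ _ _ _ hK hp hb => hlt.
  apply: mulr_gt0; first by case/andP: hsc => _ h1; rewrite subr_gt0.
  by rewrite subr_gt0.
have htp : forall k, 0 < tau k.
  elim=> // k IH; by case/andP: (step k IH).
by move=> k _; apply: step.
Qed.
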